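(* Every deterministic mechanism for locating one facility on $[0,1]$ that is anonymous, Pareto efficient and strategy proof has approximation ratio at least $\frac{3}{2\sqrt2}$ for the Nash welfare.
   Context: Agents $1,\dots,n$ report locations $x_1,\dots,x_n\in[0,1]$; a deterministic mechanism $f$ maps each profile (for each $n$) to a facility location $y=f(x_1,\dots,x_n)\in[0,1]$. Agent $i$'s utility is $u_i=1-|x_i-y|$; the Nash welfare is $\left(\prod_i u_i\right)^{1/n}$. $f$ is anonymous if permuting the reports does not change the output; Pareto efficient if for no profile is there a location $z$ with $|x_j-z|\le|x_j-f(x)|$ for all $j$ and strict inequality for some $i$; strategy proof if no agent $i$ can report some $x_i'$ and obtain $|x_i-f(x_1,\dots,x_i',\dots,x_n)|<|x_i-f(x)|$. The approximation ratio of $f$ for the Nash welfare is the supremum over all profiles $x$ of $\mathrm{OPT}(x)/\mathrm{NW}(f(x))$, where $\mathrm{OPT}(x)$ is the maximum Nash welfare over facility locations in $[0,1]$. *)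

(* Defs.v *)
From HB Require Import structures.
From mathcomp Require Import all_boot all_order all_algebra all_fingroup.
From mathcomp Require Import all_classical all_reals all_analysis.
Set Implicit Arguments. Unset Strict Implicit. Unset Printing Implicit Defensive.
Import Order.TTheory GRing.Theory Num.Theory.
Local Open Scope ring_scope.
Local Open Scope classical_set_scope.

Section FacilityLocation.
Variable R : realType.

Definition in01 (t : R) : Prop := 0 <= t <= 1.

Definition profile01 (n : nat) (x : 'I_n -> R) : Prop := forall i, in01 (x i).

Definition util (xi y : R) : R := 1 - `|xi - y|.

Definition nash_welfare (n : nat) (x : 'I_n -> R) (y : R) : R :=
  (\prod_(i < n) util (x i) y) `^ (n%:R)^-1.

Definition opt_nw (n : nat) (x : 'I_n -> R) : R :=
  sup (nash_welfare x @` [set y | in01 y]).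

Definition mechanism := forall n : nat, ('I_n -> R) -> R.

Definition valid_mechanism (f : mechanism) : Prop :=
  forall n (x : 'I_n -> R), profile01 x -> in01 (f n x).

Definition anonymous (f : mechanism) : Prop :=
  forall n (s : 'S_n) (x : 'I_n -> R), profile01 x ->
    f n (fun i => x (s i)) = f n x.

Definition pareto_efficient (f : mechanism) : Prop :=
  forall n (x : 'I_n -> R), profile01 x ->
    ~ exists z : R, in01 z /\
        (forall j, `|x j - z| <= `|x j - f n x|) /\
        (exists i, `|x i - z| < `|x i - f n x|).

Definition strategy_proof (f : mechanism) : Prop :=
  forall n (x : 'I_n -> R) (i : 'I_n) (xi' : R), profile01 x -> in01 xi' ->
    ~ (`|x i - f n (fun j => if j == i then xi' else x j)| < `|x i - f n x|).

(* approximation ratio sup_x OPT(x)/NW(f(x)) is at least c, i.e. for every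
   r < c some profile has OPT(x) > r * NW(f(x))  (this also covers NW = 0,
   where the ratio is +oo) *)
Definition approx_ratio_at_least (f : mechanism) (c : R) : Prop :=
  forall r : R, r < c ->
    exists n (x : 'I_n -> R), profile01 x /\ r * nash_welfare x (f n x) < opt_nw x.

End FacilityLocation.

(* Main.v *)
Require Import Defs.
From HB Require Import structures.
From mathcomp Require Import all_boot all_order all_algebra all_fingroup.
From mathcomp Require Import all_classical all_reals all_analysis.
From mathcomp Require Import ring lra.
Import Order.TTheory GRing.Theory Num.Theory.
Local Open Scope ring_scope.

Section S.
Variable R : realType.
Definition prof (p q : R) : 'I_2 -> R := fun i => if i == ord0 then p else q.

Lemma nw_prof (p q y : R) : 0 <= util p y * util q y ->
  nash_welfare (prof p q) y = Num.sqrt (util p y * util q y).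
Proof.
move=> h; rewrite /nash_welfare !big_ord_recl big_ord0 mulr1 /prof /=.
by rewrite powR12_sqrt.
Qed.

Lemma util_le1 (p y : R) : util p y <= 1.
Proof. by rewrite /util lerBlDr lerDl. Qed.

Lemma util_ge0 (p y : R) : in01 p -> in01 y -> 0 <= util p y.
Proof.
rewrite /in01 /util => /andP[p0 p1] /andP[y0 y1]; rewrite subr_ge0.
rewrite ler_norml; apply/andP; split; lra.
Qed.

Lemma opt_ge (p q y : R) : in01 p -> in01 q -> in01 y ->
  nash_welfare (prof p q) y <= opt_nw (prof p q).
Proof.
move=> hp hq hy; apply: ub_le_sup; last by exists y.
exists 1 => _ [z hz <-]; rewrite nw_prof; last first.
  by apply: mulr_ge0; apply: util_ge0.
rewrite -(sqrtr1 R) ler_sqrt //.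
by apply: mulr_ile1; [apply: util_ge0|apply: util_ge0|apply: util_le1|apply: util_le1].
Qed.

Lemma key (r s : R) : r < 3 / (2 * Num.sqrt (2:R)) -> 0 <= s -> s ^+ 2 * 2 <= 1 ->
  r * s < (1 + s ^+ 2) / 2.
Proof.
move=> hr hs hs2.
set t := Num.sqrt (2:R).
have t0 : 0 < t by rewrite sqrtr_gt0.
have t2 : t ^+ 2 = 2 by rewrite sqr_sqrtr.
have ts : t * s <= 1.
  have h0 : 0 <= t * s by rewrite mulr_ge0 // ltW.
  have : (t * s) ^+ 2 <= 1 by rewrite exprMn t2 mulrC.
  move=> h; nra.
have st : s <= t by nra.
have [->|sp] := eqVneq s 0; first by rewrite mulr0 expr2 mulr0; lra.
have spos : 0 < s by rewrite lt_def sp.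
have h1 : r * s < 3 / (2 * t) * s by rewrite ltr_pM2r.
apply: (lt_le_trans h1).
rewrite mulrAC ler_pdivrMr ?mulr_gt0 //.
have -> : (1 + s^+2)/2*(2*t) = (1+s^+2)*t by field; rewrite ?gt_eqF.
have : 0 <= (t*s - 1) * (s - t) by apply: mulr_le0; lra.
nra.
Qed.

Lemma utilxx (a : R) : util a a = 1.
Proof. by rewrite /util subrr normr0 subr0. Qed.

End S.
Arguments key {R}. Arguments opt_ge {R}. Arguments nw_prof {R}. Arguments util_ge0 {R}. Arguments utilxx {R}. Arguments prof {R}.

Theorem theorem12 (R : realType) (f : mechanism R) :
  valid_mechanism f -> anonymous f -> pareto_efficient f -> strategy_proof f ->
  approx_ratio_at_least f (3 / (2 * Num.sqrt 2)).
Proof.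
move=> hv _ _ hsp r hr.
have i0 : in01 (0 : R) by rewrite /in01 lexx ler01.
have i1 : in01 (1 : R) by rewrite /in01 lexx ler01.
have p01 : profile01 (prof (0:R) 1) by move=> i; rewrite /prof; case: ifP.
have ha := hv 2%N _ p01; set a := f 2%N (prof (0:R) 1) in ha.
move: (ha); rewrite /in01 => /andP[a0 a1].
have [ale|alt] := lerP a (2^-1).
- have pa : profile01 (prof a 1) by move=> i; rewrite /prof; case: ifP.
  have fa : f 2%N (prof a 1) = a.
    have := hsp 2%N (prof a 1) ord0 0 pa i0.
    have -> : (fun j : 'I_2 => if j == ord0 then 0 else prof a 1 j) = prof (0:R) 1.
      by apply: funext => j; rewrite /prof; case: ifP => // ->.
    rewrite -/a /prof /= subrr normr0 => h.
    apply/eqP; rewrite eq_sym -subr_eq0 -normr_le0; rewrite leNgt; exact/negP.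
  exists 2%N, (prof a 1); split => //.
  have hy : in01 ((1 + a) / 2) by rewrite /in01; apply/andP; split; lra.
  apply: (lt_le_trans _ (opt_ge _ _ _ ha i1 hy)).
  rewrite fa !nw_prof ?utilxx ?mul1r; first last.
  - by apply: util_ge0.
  - rewrite /util; have -> : a - (1 + a) / 2 = - ((1 - a) / 2) by field.
    rewrite normrN ger0_norm; last lra.
    have -> : 1 - (1 + a) / 2 = (1 - a) / 2 by field.
    rewrite ger0_norm; last lra. nra.
  rewrite /util; have -> : a - (1 + a) / 2 = - ((1 - a) / 2) by field.
  rewrite normrN ger0_norm; last lra.
  have -> : 1 - (1 + a) / 2 = (1 - a) / 2 by field.
  rewrite ger0_norm; last lra.
  have -> : 1 - (1 - a) = a by ring.
  have -> : (1 - (1 - a) / 2) * (1 - (1 - a) / 2) = ((1 + a) / 2) ^+ 2 by field.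
  rewrite sqrtr_sqr ger0_norm; last lra.
  have := key _ _ hr (sqrtr_ge0 a); rewrite sqr_sqrtr // => /(_ ltac:(lra)).
  lra.
- have pa : profile01 (prof 0 a) by move=> i; rewrite /prof; case: ifP.
  have fa : f 2%N (prof 0 a) = a.
    have := hsp 2%N (prof 0 a) (lift ord0 ord0) 1 pa i1.
    have -> : (fun j : 'I_2 => if j == lift ord0 ord0 then 1 else prof 0 a j) = prof (0:R) 1.
      by apply: funext => -[[|[|m]] hm].
    rewrite -/a /prof /= subrr normr0 => h.
    apply/eqP; rewrite eq_sym -subr_eq0 -normr_le0; rewrite leNgt; exact/negP.
  exists 2%N, (prof 0 a); split => //.
  have hy : in01 (a / 2) by rewrite /in01; apply/andP; split; lra.
  apply: (lt_le_trans _ (opt_ge _ _ _ i0 ha hy)).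
  rewrite fa !nw_prof ?utilxx ?mulr1; first last.
  - by apply: util_ge0.
  - rewrite /util !sub0r !normrN; have -> : a - a / 2 = a / 2 by field.
    rewrite ger0_norm; last lra. nra.
  rewrite /util !sub0r !normrN; have -> : a - a / 2 = a / 2 by field.
  rewrite ger0_norm; last lra.
  rewrite ger0_norm; last lra.
  have -> : (1 - a / 2) * (1 - a / 2) = ((2 - a) / 2) ^+ 2 by field.
  rewrite sqrtr_sqr ger0_norm; last lra.
  have := key _ _ hr (sqrtr_ge0 (1 - a)); rewrite sqr_sqrtr; last lra.
  move=> /(_ ltac:(lra)). lra.
Qed.
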